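(* Consider the downtown bathtub model with and without perimeter control described in the context, with a fixed number $N_s>0$ of suburban commuters. Then: (i) the short-run equilibrium bathtub cost under perimeter control, $C_s^{bp*}$, is uniquely determined, namely (in the controlled regime $\theta^p>2$) $$C_s^{bp*}=\frac{\beta\gamma}{\beta+\gamma}\,\frac{N_s}{n_jv_f/(4L)}+\frac{4\alpha L}{v_f}(1-\ln 2);$$ (ii) the introduction of autonomous vehicles decreases $C_s^{bp*}$: $C_s^{bp*}$ is strictly decreasing in $n_j$ and strictly increasing in $\alpha$, so replacing $(\alpha,n_j)$ by $(\eta\alpha,\xi n_j)$ with $\frac{\beta}{\alpha}<\eta\le1$, $\xi\ge1$, $(\eta,\xi)\neq(1,1)$ strictly decreases it; (iii) hypercongestion mitigation by perimeter control decreases the short-run equilibrium bathtub cost: if the equilibrium without control has $\theta=\frac{C_s^{b*}v_f}{\alpha L}>2$ (hypercongestion), then $C_s^{b*}>C_s^{bp*}$.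
   Context: Downtown traffic: accumulation $n(t)\ge0$, $\dot n=I-G$, outflow $G=nv/L$, $L>0$ trip length, $v=v_f(1-n/n_j)$, $v_f,n_j>0$; travel time $T(t)=L/v(t)$; schedule cost $s(t)=\beta(t^*-t)$ for $t\le t^*$, $\gamma(t-t^* )$ for $t>t^*$; $\alpha,\beta,\gamma>0$. Without control: bathtub cost $C_s^b(t)=\alpha T(t)+s(t)$; a short-run equilibrium is $(n(\cdot),C_s^{b*})$ with $C_s^b(t)=C_s^{b*}$ when $n(t)>0$, $\ge C_s^{b*}$ when $n(t)=0$, and $\int n v/L\,dt=N_s$; it satisfies $N_s=\alpha n_j(\frac1\beta+\frac1\gamma)(\ln\theta+\frac1\theta-1)$ with $\theta=C_s^{b*}v_f/(\alpha L)$. Perimeter control: inflow $I(t)=I_p:=n_jv_f/(4L)$ when $n(t)=n_j/2$, and equal to the boundary arrival rate when $n(t)<n_j/2$; excess vehicles wait in a FIFO point queue, with waiting time $T_w(t)=q(t)/I_p$ for queue length $q(t)$ met by the commuter arriving at $t$; during the control period $[t_s^p,t_e^p]$ downtown travel time is $T^p(t)=2L/v_f+T_w(t)$, otherwise $T^p(t)=T(t)$; bathtub cost $C_s^{bp}(t)=\alpha T^p(t)+s(t)$; equilibrium $(n,q,C_s^{bp*})$ with $C_s^{bp}(t)=C_s^{bp*}$ when $n(t)>0$, $\ge$ when $n(t)=0$, $n(t)=n_j/2$ when $q(t)>0$, $n(t)\le n_j/2$ when $q(t)=0$, and $\int nv/L\,dt=N_s$; $\theta^p=C_s^{bp*}v_f/(\alpha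 L)$. Autonomous vehicles: $\alpha\mapsto\eta\alpha$, $n_j\mapsto\xi n_j$. *)

(* Defs.v *)
From Stdlib Require Import Reals Lra.
From Coquelicot Require Import Coquelicot.
Open Scope R_scope.

Definition speed (vf nj n : R) : R := vf * (1 - n / nj).

Definition outflow (L vf nj n : R) : R := n * speed vf nj n / L.

Definition sched (beta gamma tstar t : R) : R :=
  if Rle_dec t tstar then beta * (tstar - t) else gamma * (t - tstar).

Definition Ip (L vf nj : R) : R := nj * vf / (4 * L).

(* theta = C v_f / (alpha L)  (also used for theta^p) *)
Definition theta (alpha L vf C : R) : R := C * vf / (alpha * L).

Definition bathtub_eq (alpha beta gamma tstar L vf nj Ns : R)
    (n : R -> R) (C : R) : Prop :=
  (forall t, 0 <= n t < nj) /\
  (forall t, 0 < n t ->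
     alpha * (L / speed vf nj (n t)) + sched beta gamma tstar t = C) /\
  (forall t, n t = 0 ->
     alpha * (L / speed vf nj (n t)) + sched beta gamma tstar t >= C) /\
  is_RInt_gen (fun t => outflow L vf nj (n t))
    (Rbar_locally m_infty) (Rbar_locally p_infty) Ns.

Definition Tp (L vf nj : R) (n q : R -> R) (ts te t : R) : R :=
  if Rle_dec ts t then
    if Rle_dec t te then 2 * L / vf + q t / Ip L vf nj
    else L / speed vf nj (n t)
  else L / speed vf nj (n t).

Definition ctrl_eq (alpha beta gamma tstar L vf nj Ns : R)
    (n q : R -> R) (ts te C : R) : Prop :=
  (forall t, 0 <= n t) /\
  (forall t, 0 <= q t) /\
  (forall t, 0 < q t -> n t = nj / 2) /\
  (forall t, q t = 0 -> n t <= nj / 2) /\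
  (forall t, ts <= t <= te -> n t = nj / 2) /\
  (forall t, 0 < n t ->
     alpha * Tp L vf nj n q ts te t + sched beta gamma tstar t = C) /\
  (forall t, n t = 0 ->
     alpha * Tp L vf nj n q ts te t + sched beta gamma tstar t >= C) /\
  is_RInt_gen (fun t => outflow L vf nj (n t))
    (Rbar_locally m_infty) (Rbar_locally p_infty) Ns.

Definition Cbp_formula (alpha beta gamma L vf nj Ns : R) : R :=
  beta * gamma / (beta + gamma) * (Ns / Ip L vf nj)
  + 4 * alpha * L / vf * (1 - ln 2).

(* Main.v *)
Require Import Defs.
From Stdlib Require Import Reals Lra.
From Coquelicot Require Import Coquelicot.
Open Scope R_scope.

Lemma gen_zero (H : R -> R) (Fa Fb : (R -> Prop) -> Prop) :
  Filter Fa -> Filter Fb ->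
  filter_prod Fa Fb (fun ab => forall x, Rmin (fst ab) (snd ab) < x < Rmax (fst ab) (snd ab) -> H x = 0) ->
  is_RInt_gen H Fa Fb 0.
Proof.
  intros FFa FFb Hz.
  assert (G : is_RInt_gen (Derive (fun _ : R => 0)) Fa Fb (0 - 0)).
  { apply is_RInt_gen_Derive.
    - apply filter_forall. intros ab x _. apply ex_derive_const.
    - apply filter_forall. intros ab x _.
      apply (continuous_ext (fun _ => 0)). intros; symmetry; apply Derive_const.
      apply continuous_const.
    - apply filterlim_const.
    - apply filterlim_const. }
  rewrite Rminus_diag in G.
  eapply is_RInt_gen_ext; [ | exact G].
  eapply filter_imp; [ | exact Hz].
  intros ab Hab x Hx. rewrite Derive_const. symmetry; auto.
Qed.

Lemma sched_nonneg beta gamma tstar t : 0 < beta -> 0 < gamma -> 0 <= sched beta gamma tstar t.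
Proof. intros. unfold sched. destruct (Rle_dec t tstar); nra. Qed.

Lemma gen_int (H h : R -> R) (beta gamma tstar C a I : R) :
 0 < beta -> 0 < gamma -> a < C ->
 (forall t, H t = h (C - sched beta gamma tstar t)) ->
 (forall x, x <= a -> h x = 0) ->
 is_RInt h a C I ->
 is_RInt_gen H (Rbar_locally m_infty) (Rbar_locally p_infty) (I/beta + I/gamma).
Proof.
  intros hb hg haC HH h0 HI.
  set (t1 := tstar - (C - a)/beta).
  set (t4 := tstar + (C - a)/gamma).
  assert (t1 < tstar) by (unfold t1; apply Rminus_lt_0; field_simplify; [ apply Rdiv_lt_0_compat; lra| lra]).
  assert (tstar < t4) by (unfold t4; assert (0 < (C-a)/gamma) by (apply Rdiv_lt_0_compat; lra); lra).
  assert (L1 : is_RInt H t1 tstar (I/beta)).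
  { set (v := C - beta * tstar).
    assert (A := is_RInt_scal h a C (/beta) I HI).
    replace a with (beta * t1 + v) in A by (unfold v, t1; field; lra).
    replace C with (beta * tstar + v) in A by (unfold v; ring).
    apply is_RInt_comp_lin in A.
    replace (I/beta) with (scal (/beta) I) by (unfold scal; simpl; unfold mult; simpl; field; lra).
    eapply is_RInt_ext; [ | exact A].
    intros x Hx. rewrite Rmin_left in Hx by lra. rewrite Rmax_right in Hx by lra.
    rewrite HH. unfold sched. destruct (Rle_dec x tstar); [|lra].
    unfold scal; simpl; unfold mult; simpl. unfold v.
    replace (C - beta * (tstar - x)) with (beta * x + (C - beta * tstar)) by ring.
    field; lra. }
  assert (L2 : is_RInt H tstar t4 (I/gamma)).
  { set (v := C + gamma * tstar).
    assert (A := is_RInt_scal h a C (-/gamma) I HI).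
    apply is_RInt_swap in A.
    replace a with (-gamma * t4 + v) in A by (unfold v, t4; field; lra).
    replace C with (-gamma * tstar + v) in A by (unfold v; ring).
    apply is_RInt_comp_lin in A.
    replace (I/gamma) with (opp (scal (-/gamma) I)) by (unfold opp, scal; simpl; unfold mult, opp; simpl; field; lra).
    eapply is_RInt_ext; [ | exact A].
    intros x Hx. rewrite Rmin_left in Hx by lra. rewrite Rmax_right in Hx by lra.
    rewrite HH. unfold sched. destruct (Rle_dec x tstar); [lra|].
    unfold scal; simpl; unfold mult; simpl. unfold v.
    replace (C - gamma * (x - tstar)) with (-gamma * x + (C + gamma * tstar)) by ring.
    field; lra. }
  assert (M := is_RInt_Chasles _ _ _ _ _ _ L1 L2).
  apply is_RInt_gen_at_point in M.
  assert (R1 : is_RInt_gen H (at_point t4) (Rbar_locally p_infty) 0).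
  { apply gen_zero; try typeclasses eauto.
    apply (Filter_prod _ _ _ (fun x => x = t4) (fun y => t4 < y)).
    - reflexivity.
    - exists t4. auto.
    - intros x y -> Hy z Hz. simpl in Hz.
      rewrite Rmin_left in Hz by lra. rewrite Rmax_right in Hz by lra.
      rewrite HH. apply h0. unfold sched. destruct (Rle_dec z tstar); [lra|].
      unfold t4 in Hz. assert ((C-a) < gamma * (z - tstar)).
      { destruct Hz as [Hz _]. apply (Rmult_lt_compat_l gamma) in Hz; [|lra].
        replace (gamma * (tstar + (C - a) / gamma)) with (gamma*tstar + (C-a)) in Hz by (field; lra). lra. }
      lra. }
  assert (R0 : is_RInt_gen H (Rbar_locally m_infty) (at_point t1) 0).
  { apply gen_zero; try typeclasses eauto.
    apply (Filter_prod _ _ _ (fun y => y < t1) (fun x => x = t1)).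
    - exists t1. auto.
    - reflexivity.
    - intros x y Hx -> z Hz. simpl in Hz.
      rewrite Rmin_left in Hz by lra. rewrite Rmax_right in Hz by lra.
      rewrite HH. apply h0. unfold sched. destruct (Rle_dec z tstar); [|lra].
      unfold t1 in Hz. assert ((C-a) < beta * (tstar - z)).
      { destruct Hz as [_ Hz]. apply (Rmult_lt_compat_l beta) in Hz; [|lra].
        replace (beta * (tstar - (C - a) / beta)) with (beta*tstar - (C-a)) in Hz by (field; lra). lra. }
      lra. }
  assert (F := is_RInt_gen_Chasles _ _ _ _ M R1).
  assert (F2 := is_RInt_gen_Chasles _ _ _ _ R0 F).
  replace (I/beta + I/gamma) with (plus 0 (plus (plus (I/beta) (I/gamma)) 0)) by (unfold plus; simpl; ring).
  exact F2.
Qed.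

Definition gfun (k a x : R) : R := k * (1/x - a/(x*x)).
Definition Pfun (k a x : R) : R := k * (ln x + a/x).

Lemma smooth_int k a b : 0 < a <= b -> is_RInt (gfun k a) a b (Pfun k a b - Pfun k a a).
Proof.
  intros [ha hab].
  apply (is_RInt_derive (Pfun k a) (gfun k a)).
  - intros x Hx. rewrite Rmin_left in Hx by lra. rewrite Rmax_right in Hx by lra.
    unfold Pfun, gfun. auto_derive. lra. field. lra.
  - intros x Hx. rewrite Rmin_left in Hx by lra. rewrite Rmax_right in Hx by lra.
    apply (ex_derive_continuous (V:=R_CompleteNormedModule) (gfun k a)). unfold gfun. auto_derive.
    assert (0 < x * x) by nra. repeat split; lra.
Qed.


Definition hb (k a x : R) : R := if Rle_dec x a then 0 else gfun k a x.
Definition hc (k a c x : R) : R :=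
  if Rle_dec x a then 0 else if Rle_dec x (2*a) then gfun k a x else c.

Lemma outflow_formula L vf nj alpha m :
  0 < L -> 0 < vf -> 0 < nj -> 0 < alpha -> 0 < m < nj ->
  outflow L vf nj m = gfun (nj*alpha) (alpha*L/vf) (alpha * (L / speed vf nj m)).
Proof.
  intros. unfold outflow, gfun, speed.
  assert (0 < 1 - m/nj).
  { apply Rlt_Rminus. apply (Rmult_lt_reg_r nj); [lra|]. field_simplify; lra. }
  field. repeat split; try lra.
Qed.

Lemma speed0 vf nj : 0 < nj -> speed vf nj 0 = vf.
Proof. intros. unfold speed. field. lra. Qed.

Lemma bath_point alpha beta gamma tstar L vf nj Ns n C t :
  0 < L -> 0 < vf -> 0 < nj -> 0 < alpha ->
  bathtub_eq alpha beta gamma tstar L vf nj Ns n C ->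
  outflow L vf nj (n t) = hb (nj*alpha) (alpha*L/vf) (C - sched beta gamma tstar t).
Proof.
  intros hL hvf hnj ha [Hr [Hp [Hz _]]].
  destruct (Hr t) as [h0 h1].
  destruct h0 as [hpos | hzero].
  - specialize (Hp t hpos).
    replace (C - sched beta gamma tstar t) with (alpha * (L / speed vf nj (n t))) by lra.
    unfold hb. destruct (Rle_dec _ _) as [r|r].
    + exfalso. unfold speed in r.
      assert (0 < 1 - n t/nj) by (apply Rlt_Rminus; apply (Rmult_lt_reg_r nj); [lra|]; field_simplify; lra).
      assert (1 - n t/nj < 1) by (assert (0 < n t / nj) by (apply Rdiv_lt_0_compat; lra); lra).
      assert (L / (vf * (1 - n t / nj)) > L / vf).
      { unfold Rdiv. apply Rmult_lt_compat_l; [lra|]. assert (0 < vf * (1 - n t / nj)) by (apply Rmult_lt_0_compat; lra). apply Rinv_lt_contravar. apply Rmult_lt_0_compat; lra. nra. }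
      assert (alpha * (L / (vf * (1 - n t / nj))) > alpha * (L/vf)) by (apply Rmult_lt_compat_l; lra).
      assert (alpha * L / vf = alpha * (L/vf)) by (field; lra). lra.
    + apply outflow_formula; lra.
  - specialize (Hz t (eq_sym hzero)). rewrite <- hzero in *. rewrite speed0 in Hz by lra.
    unfold hb. destruct (Rle_dec _ _) as [r|r].
    + unfold outflow. field. lra.
    + exfalso. assert (alpha * L / vf = alpha * (L/vf)) by (field; lra). lra.
Qed.

Lemma Tp_out L vf nj n q ts te t : ~ (ts <= t <= te) -> Tp L vf nj n q ts te t = L / speed vf nj (n t).
Proof. intros H. unfold Tp. destruct (Rle_dec ts t); destruct (Rle_dec t te); auto; exfalso; lra. Qed.

Lemma Tp_in L vf nj n q ts te t : ts <= t <= te -> Tp L vf nj n q ts te t = 2 * L / vf + q t / Ip L vf nj.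
Proof. intros H. unfold Tp. destruct (Rle_dec ts t); destruct (Rle_dec t te); auto; exfalso; lra. Qed.

Lemma ctrl_point alpha beta gamma tstar L vf nj Ns n q ts te C t :
  0 < L -> 0 < vf -> 0 < nj -> 0 < alpha ->
  ctrl_eq alpha beta gamma tstar L vf nj Ns n q ts te C ->
  outflow L vf nj (n t) = hc (nj*alpha) (alpha*L/vf) (nj*vf/(4*L)) (C - sched beta gamma tstar t).
Proof.
  intros hL hvf hnj ha [Hn [Hq [Hqp [Hq0 [Hin [Hp [Hz _]]]]]]].
  assert (Ea : alpha * L / vf = alpha * (L/vf)) by (field; lra).
  assert (hle : n t <= nj/2).
  { destruct (Hq t) as [h|h]; [rewrite (Hqp t h); lra | apply Hq0; auto]. }
  assert (hIp : 0 < Ip L vf nj).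
  { unfold Ip. apply Rdiv_lt_0_compat; [apply Rmult_lt_0_compat|]; lra. }
  destruct (Hn t) as [hpos | hzero].
  - specialize (Hp t hpos).
    destruct (Rle_dec ts t) as [r1|r1]; [destruct (Rle_dec t te) as [r2|r2]|].
    +
      rewrite Tp_in in Hp by lra. rewrite (Hin t) by lra.
      assert (0 <= q t / Ip L vf nj) by (apply Rdiv_le_0_compat; auto).
      assert (hx : C - sched beta gamma tstar t >= 2 * (alpha*L/vf)).
      { assert (alpha * (2 * L / vf) = 2 * (alpha * L / vf)) by (field; lra). nra. }
      unfold hc. destruct (Rle_dec _ (alpha*L/vf)) as [r|r].
      { exfalso. assert (0 < alpha * L / vf) by (apply Rdiv_lt_0_compat; [apply Rmult_lt_0_compat|]; lra). lra. }
      destruct (Rle_dec _ _) as [r'|r'].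
      * replace (C - sched beta gamma tstar t) with (2 * (alpha*L/vf)) by lra.
        unfold outflow, speed, gfun. field. lra.
      * unfold outflow, speed. field. lra.
    + rewrite Tp_out in Hp by lra.
      replace (C - sched beta gamma tstar t) with (alpha * (L / speed vf nj (n t))) by lra.
      assert (0 < 1 - n t/nj) by (apply Rlt_0_minus; apply (Rmult_lt_reg_r nj); [lra|]; field_simplify; lra).
      assert (1 - n t/nj < 1) by (assert (0 < n t / nj) by (apply Rdiv_lt_0_compat; lra); lra).
      assert (1/2 <= 1 - n t/nj) by (assert (n t / nj <= 1/2) by (apply (Rmult_le_reg_r nj); [lra|]; field_simplify; lra); lra).
      assert (0 < vf * (1 - n t / nj)) by (apply Rmult_lt_0_compat; lra).
      assert (L / (vf * (1 - n t / nj)) > L / vf).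
      { unfold Rdiv. apply Rmult_lt_compat_l; [lra|]. apply Rinv_lt_contravar. apply Rmult_lt_0_compat; lra. nra. }
      assert (L / (vf * (1 - n t / nj)) <= 2 * (L / vf)).
      { replace (2 * (L/vf)) with (L / (vf * (1/2))) by (field; lra).
        unfold Rdiv. apply Rmult_le_compat_l; [lra|]. apply Rinv_le_contravar. nra. nra. }
      unfold hc, speed. destruct (Rle_dec _ _) as [r|r].
      { exfalso. assert (alpha * (L / (vf * (1 - n t / nj))) > alpha * (L/vf)) by (apply Rmult_lt_compat_l; lra). lra. }
      destruct (Rle_dec _ _) as [r'|r'].
      * fold (speed vf nj (n t)). apply outflow_formula; lra.
      * exfalso. assert (alpha * (L / (vf * (1 - n t / nj))) <= alpha * (2 * (L/vf))) by (apply Rmult_le_compat_l; lra). lra.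
    +
      rewrite Tp_out in Hp by lra.
      replace (C - sched beta gamma tstar t) with (alpha * (L / speed vf nj (n t))) by lra.
      assert (0 < 1 - n t/nj) by (apply Rlt_0_minus; apply (Rmult_lt_reg_r nj); [lra|]; field_simplify; lra).
      assert (1 - n t/nj < 1) by (assert (0 < n t / nj) by (apply Rdiv_lt_0_compat; lra); lra).
      assert (1/2 <= 1 - n t/nj) by (assert (n t / nj <= 1/2) by (apply (Rmult_le_reg_r nj); [lra|]; field_simplify; lra); lra).
      assert (0 < vf * (1 - n t / nj)) by (apply Rmult_lt_0_compat; lra).
      assert (L / (vf * (1 - n t / nj)) > L / vf).
      { unfold Rdiv. apply Rmult_lt_compat_l; [lra|]. apply Rinv_lt_contravar. apply Rmult_lt_0_compat; lra. nra. }
      assert (L / (vf * (1 - n t / nj)) <= 2 * (L / vf)).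
      { replace (2 * (L/vf)) with (L / (vf * (1/2))) by (field; lra).
        unfold Rdiv. apply Rmult_le_compat_l; [lra|]. apply Rinv_le_contravar. nra. nra. }
      unfold hc, speed. destruct (Rle_dec _ _) as [r|r].
      { exfalso. assert (alpha * (L / (vf * (1 - n t / nj))) > alpha * (L/vf)) by (apply Rmult_lt_compat_l; lra). lra. }
      destruct (Rle_dec _ _) as [r'|r'].
      * fold (speed vf nj (n t)). apply outflow_formula; lra.
      * exfalso. assert (alpha * (L / (vf * (1 - n t / nj))) <= alpha * (2 * (L/vf))) by (apply Rmult_le_compat_l; lra). lra.
  - specialize (Hz t (eq_sym hzero)).
    assert (~ (ts <= t <= te)) by (intro hh; rewrite (Hin t hh) in hzero; lra).
    rewrite Tp_out in Hz by auto. rewrite <- hzero in *. rewrite speed0 in Hz by lra.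
    unfold hc. destruct (Rle_dec _ _) as [r|r].
    + unfold outflow. field. lra.
    + exfalso. lra.
Qed.

Lemma uniq_gen (f : R -> R) l1 l2 :
  is_RInt_gen f (Rbar_locally m_infty) (Rbar_locally p_infty) l1 ->
  is_RInt_gen f (Rbar_locally m_infty) (Rbar_locally p_infty) l2 -> l1 = l2.
Proof.
  intros A B.
  assert (A' := @is_RInt_gen_unique R_CompleteNormedModule _ _ (Proper_StrongProper _ (Rbar_locally_filter _)) (Proper_StrongProper _ (Rbar_locally_filter _)) f l1 A).
  assert (B' := @is_RInt_gen_unique R_CompleteNormedModule _ _ (Proper_StrongProper _ (Rbar_locally_filter _)) (Proper_StrongProper _ (Rbar_locally_filter _)) f l2 B).
  congruence.
Qed.

Lemma bath_value alpha beta gamma tstar L vf nj Ns n C :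
  0 < L -> 0 < vf -> 0 < nj -> 0 < alpha -> 0 < beta -> 0 < gamma ->
  bathtub_eq alpha beta gamma tstar L vf nj Ns n C ->
  alpha * L / vf < C ->
  Ns = (Pfun (nj*alpha) (alpha*L/vf) C - Pfun (nj*alpha) (alpha*L/vf) (alpha*L/vf)) / beta
     + (Pfun (nj*alpha) (alpha*L/vf) C - Pfun (nj*alpha) (alpha*L/vf) (alpha*L/vf)) / gamma.
Proof.
  intros hL hvf hnj ha hb' hg HE hC.
  assert (ha0 : 0 < alpha * L / vf) by (apply Rdiv_lt_0_compat; [apply Rmult_lt_0_compat|]; lra).
  assert (G := gen_int (fun t => outflow L vf nj (n t)) (hb (nj*alpha) (alpha*L/vf)) beta gamma tstar C (alpha*L/vf)
     (Pfun (nj*alpha) (alpha*L/vf) C - Pfun (nj*alpha) (alpha*L/vf) (alpha*L/vf)) hb' hg hC).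
  symmetry. apply (uniq_gen (fun t => outflow L vf nj (n t))); [ apply G | destruct HE as [_ [_ [_ HE]]]; exact HE].
  - intros t. eapply bath_point; eauto.
  - intros x hx. unfold hb. destruct (Rle_dec x _); [auto| lra].
  - eapply is_RInt_ext; [| apply smooth_int; lra].
    intros x Hx. rewrite Rmin_left in Hx by lra. rewrite Rmax_right in Hx by lra.
    unfold hb. destruct (Rle_dec x _); [lra| auto].
Qed.

Lemma ctrl_value alpha beta gamma tstar L vf nj Ns n q ts te C :
  0 < L -> 0 < vf -> 0 < nj -> 0 < alpha -> 0 < beta -> 0 < gamma ->
  ctrl_eq alpha beta gamma tstar L vf nj Ns n q ts te C ->
  2 * (alpha * L / vf) < C ->
  let I := (Pfun (nj*alpha) (alpha*L/vf) (2*(alpha*L/vf)) - Pfun (nj*alpha) (alpha*L/vf) (alpha*L/vf))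
           + (C - 2*(alpha*L/vf)) * (nj*vf/(4*L)) in
  Ns = I / beta + I / gamma.
Proof.
  intros hL hvf hnj ha hb' hg HE hC I.
  assert (ha0 : 0 < alpha * L / vf) by (apply Rdiv_lt_0_compat; [apply Rmult_lt_0_compat|]; lra).
  assert (G := gen_int (fun t => outflow L vf nj (n t)) (hc (nj*alpha) (alpha*L/vf) (nj*vf/(4*L))) beta gamma tstar C (alpha*L/vf)
     I hb' hg ltac:(lra)).
  symmetry. apply (uniq_gen (fun t => outflow L vf nj (n t))); [ apply G | destruct HE as [_ [_ [_ [_ [_ [_ [_ HE]]]]]]]; exact HE].
  - intros t. eapply ctrl_point; eauto.
  - intros x hx. unfold hc. destruct (Rle_dec x _); [auto| lra].
  - assert (P1 : is_RInt (hc (nj * alpha) (alpha * L / vf) (nj * vf / (4 * L))) (alpha*L/vf) (2*(alpha*L/vf))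
        (Pfun (nj*alpha) (alpha*L/vf) (2*(alpha*L/vf)) - Pfun (nj*alpha) (alpha*L/vf) (alpha*L/vf))).
    { eapply is_RInt_ext; [| apply smooth_int; lra].
      intros x Hx. rewrite Rmin_left in Hx by lra. rewrite Rmax_right in Hx by lra.
      unfold hc. destruct (Rle_dec x _); [lra| ]. destruct (Rle_dec x _); [auto|lra]. }
    assert (P2 : is_RInt (hc (nj * alpha) (alpha * L / vf) (nj * vf / (4 * L))) (2*(alpha*L/vf)) C
        (scal (C - 2*(alpha*L/vf)) (nj * vf / (4 * L)))).
    { eapply is_RInt_ext; [| apply (@is_RInt_const R_NormedModule)].
      intros x Hx. rewrite Rmin_left in Hx by lra. rewrite Rmax_right in Hx by lra.
      unfold hc. destruct (Rle_dec x _); [lra| ]. destruct (Rle_dec x _); [lra|auto]. }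
    assert (P3 := is_RInt_Chasles _ _ _ _ _ _ P1 P2).
    assert (E : plus (Pfun (nj*alpha) (alpha*L/vf) (2*(alpha*L/vf)) - Pfun (nj*alpha) (alpha*L/vf) (alpha*L/vf))
        (scal (C - 2*(alpha*L/vf)) (nj * vf / (4 * L))) = I).
    { unfold I, plus, scal; simpl; unfold mult; simpl; ring. }
    rewrite <- E. exact P3.
Qed.

Lemma theta_gt2 alpha L vf C : 0 < alpha -> 0 < L -> 0 < vf ->
  theta alpha L vf C > 2 -> 2 * (alpha * L / vf) < C.
Proof.
  intros. unfold theta in H2.
  assert (0 < alpha * L) by (apply Rmult_lt_0_compat; lra).
  apply (Rmult_lt_compat_r (alpha * L / vf)) in H2; [|apply Rdiv_lt_0_compat; lra].
  replace (C * vf / (alpha * L) * (alpha * L / vf)) with C in H2 by (field; lra). lra.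
Qed.

Lemma part_i alpha beta gamma tstar L vf nj Ns n q ts te C :
  0 < L -> 0 < vf -> 0 < nj -> 0 < alpha -> 0 < beta -> 0 < gamma ->
  ctrl_eq alpha beta gamma tstar L vf nj Ns n q ts te C ->
  theta alpha L vf C > 2 ->
  C = Cbp_formula alpha beta gamma L vf nj Ns.
Proof.
  intros hL hvf hnj ha hb' hg HE ht.
  assert (hC := theta_gt2 alpha L vf C ha hL hvf ht).
  assert (V := ctrl_value alpha beta gamma tstar L vf nj Ns n q ts te C hL hvf hnj ha hb' hg HE hC).
  simpl in V. rewrite V. unfold Cbp_formula, Pfun, Ip.
  assert (ha0 : 0 < alpha * L / vf) by (apply Rdiv_lt_0_compat; [apply Rmult_lt_0_compat|]; lra).
  rewrite ln_mult by lra.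
  field. repeat split; lra.
Qed.

Lemma ln_ineq y : 1 < y -> ln y < (y - 1/y)/2.
Proof.
  intros hy.
  destruct (MVT_cor2 (fun y => (y - 1/y)/2 - ln y) (fun y => (1 + 1/(y*y))/2 - 1/y) 1 y hy) as [c [Hc1 Hc2]].
  { intros c Hc. apply is_derive_Reals. auto_derive. lra. field. lra. }
  rewrite ln_1 in Hc1.
  assert (0 < (1 + 1/(c*c))/2 - 1/c).
  { replace ((1 + 1/(c*c))/2 - 1/c) with ((c-1)*(c-1)/(2*(c*c))) by (field; lra).
    apply Rdiv_lt_0_compat; nra. }
  assert (0 < ((1 + 1/(c*c))/2 - 1/c) * (y - 1)) by (apply Rmult_lt_0_compat; lra).
  replace ((1 - 1/1)/2 - 0) with 0 in Hc1 by field. lra.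
Qed.

Lemma ln2_lt_1 : ln 2 < 1.
Proof.
  rewrite <- (ln_exp 1). apply ln_increasing; [lra|].
  assert (H := exp_ineq1 1 ltac:(lra)). lra.
Qed.

Lemma Cbp_decomp alpha beta gamma L vf nj Ns :
  0 < L -> 0 < vf -> 0 < nj -> 0 < beta -> 0 < gamma ->
  Cbp_formula alpha beta gamma L vf nj Ns =
  (beta*gamma/(beta+gamma) * (4*L*Ns/vf)) / nj + (4*L/vf*(1 - ln 2)) * alpha.
Proof. intros. unfold Cbp_formula, Ip. field. repeat split; lra. Qed.

Lemma Cbp_mono alpha1 alpha2 nj1 nj2 beta gamma L vf Ns :
  0 < L -> 0 < vf -> 0 < nj1 -> 0 < beta -> 0 < gamma -> 0 < Ns ->
  0 < alpha1 <= alpha2 -> nj1 <= nj2 -> (alpha1 < alpha2 \/ nj1 < nj2) ->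
  Cbp_formula alpha1 beta gamma L vf nj2 Ns < Cbp_formula alpha2 beta gamma L vf nj1 Ns.
Proof.
  intros hL hvf hn hb hg hN ha hnj hor. rewrite !Cbp_decomp by lra.
  set (P := beta*gamma/(beta+gamma) * (4*L*Ns/vf)).
  set (Q := 4*L/vf*(1 - ln 2)).
  assert (0 < P).
  { unfold P. apply Rmult_lt_0_compat; apply Rdiv_lt_0_compat; try nra. }
  assert (0 < Q).
  { unfold Q. assert (H9 := ln2_lt_1). apply Rmult_lt_0_compat; [apply Rdiv_lt_0_compat|]; lra. }
  assert (E1 : P / nj2 <= P / nj1).
  { unfold Rdiv. apply Rmult_le_compat_l; [lra|]. apply Rinv_le_contravar; lra. }
  assert (E2 : Q * alpha1 <= Q * alpha2) by (apply Rmult_le_compat_l; lra).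
  destruct hor.
  - assert (Q * alpha1 < Q * alpha2) by (apply Rmult_lt_compat_l; lra). lra.
  - assert (P / nj2 < P / nj1).
    { unfold Rdiv. apply Rmult_lt_compat_l; [lra|]. apply Rinv_lt_contravar; nra. }
    lra.
Qed.

Theorem proposition3 (L vf nj alpha beta gamma tstar Ns : R)
  (hL : 0 < L) (hvf : 0 < vf) (hnj : 0 < nj) (halpha : 0 < alpha)
  (hbeta : 0 < beta) (hgamma : 0 < gamma) (hNs : 0 < Ns) :
  (* (i) uniqueness and closed form of C_s^{bp*} in the controlled regime *)
  (forall (n q : R -> R) (ts te C : R),
     ctrl_eq alpha beta gamma tstar L vf nj Ns n q ts te C ->
     theta alpha L vf C > 2 ->
     C = Cbp_formula alpha beta gamma L vf nj Ns) /\
  (* (ii) monotonicity in n_j and alpha, and the effect of AVs *)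
  ((forall nj1 nj2, 0 < nj1 < nj2 ->
      Cbp_formula alpha beta gamma L vf nj2 Ns
      < Cbp_formula alpha beta gamma L vf nj1 Ns) /\
   (forall a1 a2, 0 < a1 < a2 ->
      Cbp_formula a1 beta gamma L vf nj Ns
      < Cbp_formula a2 beta gamma L vf nj Ns) /\
   (forall eta xi, beta / alpha < eta <= 1 -> 1 <= xi -> (eta, xi) <> (1, 1) ->
      Cbp_formula (eta * alpha) beta gamma L vf (xi * nj) Ns
      < Cbp_formula alpha beta gamma L vf nj Ns /\
      (forall (n q n' q' : R -> R) (ts te C ts' te' C' : R),
         ctrl_eq alpha beta gamma tstar L vf nj Ns n q ts te C ->
         theta alpha L vf C > 2 ->
         ctrl_eq (eta * alpha) beta gamma tstar L vf (xi * nj) Ns n' q' ts' te' C' ->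
         theta (eta * alpha) L vf C' > 2 ->
         C' < C))) /\
  (* (iii) perimeter control under hypercongestion lowers the cost *)
  (forall (n : R -> R) (Cb : R) (n' q' : R -> R) (ts te Cbp : R),
     bathtub_eq alpha beta gamma tstar L vf nj Ns n Cb ->
     theta alpha L vf Cb > 2 ->
     ctrl_eq alpha beta gamma tstar L vf nj Ns n' q' ts te Cbp ->
     Cb > Cbp).
Proof.
  split; [| split; [split; [| split] |]].
  - intros n q ts te C HE ht. eapply part_i; eauto.
  - intros nj1 nj2 [h1 h2]. apply Cbp_mono; lra.
  - intros a1 a2 [h1 h2]. apply Cbp_mono; lra.
  - intros eta xi [he1 he2] hxi hne.
    assert (hba : 0 < beta / alpha) by (apply Rdiv_lt_0_compat; lra).
    assert (hlt : Cbp_formula (eta * alpha) beta gamma L vf (xi * nj) Ns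
      < Cbp_formula alpha beta gamma L vf nj Ns).
    { apply Cbp_mono; try nra.
      destruct (Rle_lt_or_eq_dec eta 1 he2) as [e|e]; [left; nra|].
      destruct (Rle_lt_or_eq_dec 1 xi hxi) as [x|x]; [right; nra|].
      exfalso. apply hne. subst. reflexivity. }
    split; [exact hlt|].
    intros n q n' q' ts te C ts' te' C' HE ht HE' ht'.
    rewrite (part_i _ _ _ _ _ _ _ _ _ _ _ _ _ hL hvf hnj halpha hbeta hgamma HE ht).
    assert (p1 : 0 < xi * nj) by nra. assert (p2 : 0 < eta * alpha) by nra.
    rewrite (part_i _ _ _ _ _ _ _ _ _ _ _ _ _ hL hvf p1 p2 hbeta hgamma HE' ht').
    exact hlt.
  - intros n Cb n' q' ts te Cbp HB hb HC.
    assert (hCb := theta_gt2 alpha L vf Cb halpha hL hvf hb).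
    assert (ha0 : 0 < alpha * L / vf) by (apply Rdiv_lt_0_compat; [apply Rmult_lt_0_compat|]; lra).
    destruct (Rle_lt_dec (theta alpha L vf Cbp) 2) as [hp|hp].
    + unfold theta in hp.
      assert (0 < alpha * L) by (apply Rmult_lt_0_compat; lra).
      apply (Rmult_le_compat_r (alpha * L / vf)) in hp; [|lra].
      replace (Cbp * vf / (alpha * L) * (alpha * L / vf)) with Cbp in hp by (field; lra). lra.
    + rewrite (part_i _ _ _ _ _ _ _ _ _ _ _ _ _ hL hvf hnj halpha hbeta hgamma HC hp).
      rewrite (bath_value _ _ _ _ _ _ _ _ _ _ hL hvf hnj halpha hbeta hgamma HB ltac:(lra)).
      set (a := alpha * L / vf) in *.
      set (y := Cb / (2 * a)).
      assert (hy : 1 < y).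
      { unfold y. apply (Rmult_lt_reg_r (2*a)); [lra|]. field_simplify; lra. }
      assert (ECb : Cb = 2 * a * y) by (unfold y; field; lra).
      assert (hI := ln_ineq y hy).
      unfold Cbp_formula, Pfun, Ip.
      replace (4 * alpha * L / vf) with (4 * a) by (unfold a; field; lra).
      rewrite ECb. rewrite !ln_mult by lra.
      assert (Hexp : 4 * a * (ln y + 1/(2*y)) < 2 * a * y).
      { assert (0 < 4 * a) by lra.
        replace (2 * a * y) with (4 * a * (y/2)) by field.
        apply Rmult_lt_compat_l; [lra|].
        replace (y/2) with ((y - 1/y)/2 + 1/(2*y)) by (field; lra). lra. }
      apply Rlt_gt.
      match goal with |- ?l < _ => replace l with (4 * a * (ln y + 1/(2*y))) end; [exact Hexp|].
      unfold a. field. repeat split; try lra.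
Qed.
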